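(* Let $n\in\mathbb{N}$, $\varkappa\in\mathbb{N}^n$, $N=|\varkappa|$, and $\lambda$ a partition of length $\le N$. Then \[ G_\lambda(y,\varkappa)=J_\lambda\bigl(y^{[\varkappa]}\bigr)\,M(y,\varkappa). \]
   Context: $\hom_m$, $\operatorname{e}_m$: complete homogeneous and elementary symmetric polynomials, zero for negative degree (and $\operatorname{e}_m=0$ when $m$ exceeds the number of variables). Partitions are extended by zeros to length $N$. For a list of nonnegative integers $\mu$, $y^{[\mu]}$ is the list in which $y_1$ is repeated $\mu_1$ times, then $y_2$ repeated $\mu_2$ times, etc.; $b_q$ is the $q$th standard unit vector in $\mathbb{Z}^n$. Each $p\in\{1,\ldots,N\}$ is written uniquely as $p=\varkappa_1+\cdots+\varkappa_{q-1}+r$ with $1\le q\le n$, $1\le r\le\varkappa_q$. Definitions (all $N\times N$, indices in $\{1,\ldots,N\}$, $(q,r)$ associated to $p$): $J_\lambda(x)=[\hom_{\lambda_j-j+k}(x)]_{j,k=1}^N$ (Jacobi–Trudi matrix); $M(y,\varkappa)_{k,p}=(-1)^{N-k-r+1}\operatorname{e}_{N-k-r+1}\bigl(y^{[\varkappa-rb_q]}\bigr)$; $G_\lambda(y,\varkappa)_{j,p}=\binom{N+\lambda_j-j}{r-1}y_q^{N+\lambda_j-j-r+1}$ if $N+\lambda_j-j-r+1\ge0$, and $0$ otherwise. *)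

(* Defs.v *)
From HB Require Import structures.
From mathcomp Require Import all_boot all_order all_algebra.
Set Implicit Arguments. Unset Strict Implicit. Unset Printing Implicit Defensive.
Import Order.TTheory GRing.Theory Num.Theory.
Local Open Scope ring_scope.

(* complete homogeneous symmetric polynomial h_m evaluated at the list s;
   zero for negative degree *)
Definition hom {R : comNzRingType} (s : seq R) (m : int) : R :=
  match m with
  | Posz m => \sum_(t : {ffun 'I_(size s) -> 'I_m.+1} | (\sum_i val (t i) == m)%N)
                 \prod_(i < size s) s`_i ^+ t i
  | Negz _ => 0
  end.

(* elementary symmetric polynomial e_m evaluated at the list s;
   zero for negative degree, and (automatically) for m > size s *)
Definition esym {R : comNzRingType} (s : seq R) (m : int) : R :=
  match m with
  | Posz m => \sum_(A : {set 'I_(size s)} | #|A| == m) \prod_(i in A) s`_i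
  | Negz _ => 0
  end.

(* y^[mu] : y_1 repeated mu_1 times, then y_2 repeated mu_2 times, ... *)
Definition yrep {R : Type} (y : seq R) (mu : seq nat) : seq R :=
  flatten [seq nseq m.2 m.1 | m <- zip y mu].

(* partial sum kappa_1 + ... + kappa_q (0-based: first q entries) *)
Definition psum (kappa : seq nat) (q : nat) : nat := \sum_(i < q) nth 0%N kappa i.

(* For a 0-based position p0 (p = p0+1), the 0-based index q0 (q = q0+1)
   with kappa_1+..+kappa_{q-1} < p <= kappa_1+..+kappa_q *)
Definition qidx (kappa : seq nat) (p0 : nat) : nat :=
  find (fun q => (p0 < psum kappa q.+1)%N) (iota 0 (size kappa)).

(* r with p = kappa_1+..+kappa_{q-1} + r, 1 <= r <= kappa_q *)
Definition ridx (kappa : seq nat) (p0 : nat) : nat :=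
  (p0.+1 - psum kappa (qidx kappa p0))%N.

Definition kappa_minus (kappa : seq nat) (q0 r : nat) : seq nat :=
  set_nth 0%N kappa q0 (nth 0%N kappa q0 - r)%N.

Definition is_partition (lam : seq nat) : Prop :=
  sorted geq lam /\ 0%N \notin lam.

Definition JT {R : comNzRingType} (N : nat) (lam : seq nat) (x : seq R) : 'M[R]_N :=
  \matrix_(j < N, k < N) hom x ((nth 0%N lam j)%:Z - (j : nat)%:Z + (k : nat)%:Z).

Definition Mmat {R : comNzRingType} (y : seq R) (kappa : seq nat) : 'M[R]_(sumn kappa) :=
  \matrix_(k < sumn kappa, p < sumn kappa)
    let r := ridx kappa p in
    let q0 := qidx kappa p in
    let d : int := (sumn kappa)%:Z - (k : nat).+1%:Z - r%:Z + 1 in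
    (-1) ^+ `|d|%N * esym (yrep y (kappa_minus kappa q0 r)) d.

(* G_lambda(y,kappa)_{j,p} = binom(N+lambda_j-j, r-1) y_q^{N+lambda_j-j-r+1}
   if the exponent is >= 0, else 0 (N + lambda_j - j >= 0 always since j <= N) *)
Definition Gmat {R : comNzRingType} (lam : seq nat) (y : seq R) (kappa : seq nat)
  : 'M[R]_(sumn kappa) :=
  \matrix_(j < sumn kappa, p < sumn kappa)
    let r := ridx kappa p in
    let q0 := qidx kappa p in
    let a := (sumn kappa + nth 0%N lam j - (j : nat).+1)%N in
    if (r.-1 <= a)%N then ('C(a, r.-1))%:R * (nth 0 y q0) ^+ (a - r.-1)
    else 0.

(* Main.v *)
Require Import Defs.
From HB Require Import structures.
From mathcomp Require Import all_boot all_order all_algebra.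
From mathcomp Require Import zify ring lra.
Set Implicit Arguments. Unset Strict Implicit. Unset Printing Implicit Defensive.
Import Order.TTheory GRing.Theory Num.Theory.
Import Defs.
Local Open Scope ring_scope.

Section P.
Variable R : comNzRingType.

Definition Gp (K : nat) (a : R) : {poly R} := \poly_(i < K) a ^+ i.
Definition Ep (z : seq R) : {poly R} := \prod_(b <- z) (1 - b%:P * 'X).
Definition eqK (K : nat) (p q : {poly R}) := forall j, (j < K)%N -> p`_j = q`_j.

Lemma eqK_refl K p : eqK K p p. Proof. by []. Qed.
Lemma eqK_sym K p q : eqK K p q -> eqK K q p. Proof. by move=> h j /h ->. Qed.
Lemma eqK_trans K p q s : eqK K p q -> eqK K q s -> eqK K p s.
Proof. by move=> h1 h2 j jK; rewrite h1 // h2. Qed.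

Lemma eqK_mul K p p' q q' : eqK K p p' -> eqK K q q' -> eqK K (p * q) (p' * q').
Proof.
move=> hp hq j jK; rewrite !coefM; apply: eq_bigr => i _.
have iK : (i < K)%N by apply: leq_ltn_trans jK; rewrite -ltnS.
have jiK : (j - i < K)%N by apply: leq_ltn_trans jK; apply: leq_subr.
by rewrite hp // hq.
Qed.

Lemma eqK_prod K (I : Type) (r : seq I) (F F' : I -> {poly R}) :
  (forall i, eqK K (F i) (F' i)) -> eqK K (\prod_(i <- r) F i) (\prod_(i <- r) F' i).
Proof.
move=> h; elim: r => [|a r IH]; first by rewrite !big_nil.
by rewrite !big_cons; apply: eqK_mul.
Qed.

Lemma eqK_exp K p q e : eqK K p q -> eqK K (p ^+ e) (q ^+ e).
Proof.
move=> h; elim: e => [|e IH]; first by rewrite !expr0.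
by rewrite !exprS; apply: eqK_mul.
Qed.

Lemma GpE K a : Gp K a = \sum_(j < K) a ^+ j *: 'X^j.
Proof. by rewrite /Gp poly_def. Qed.

Lemma coefG K a j : (Gp K a)`_j = if (j < K)%N then a ^+ j else 0.
Proof. by rewrite /Gp coef_poly. Qed.

Lemma eqK_G K K' a : (K <= K')%N -> eqK K (Gp K' a) (Gp K a).
Proof. by move=> le j jK; rewrite !coefG jK (leq_trans jK le). Qed.

Lemma G_inv K a : eqK K (Gp K a * (1 - a%:P * 'X)) 1.
Proof.
move=> j jK; rewrite mulrBr mulr1 coefB coefG jK mulrA coefMX.
case: j jK => [|j] jK /=.
  by rewrite coefC /= subr0 expr0.
by rewrite mulrC coefCM coefG (ltnW jK) exprS mulrC subrr coefC.
Qed.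
End P.

Section P2.
Variable R : comNzRingType.

Lemma hom_coef0 (s : seq R) m : hom s (Posz m) = (\prod_(a <- s) Gp m.+1 a)`_m.
Proof.
rewrite /hom [in RHS](big_nth 0) [in RHS]big_mkord.
rewrite [in RHS](eq_bigr _ (fun i _ => GpE _ _)).
rewrite bigA_distr_bigA coef_sum [LHS]big_mkcond /=; apply: eq_bigr => t _.
rewrite [in RHS](eq_bigr _ (fun i _ => Logic.eq_sym (mul_polyC _ _))).
rewrite big_split /= -rmorph_prod prodrXr coefCM coefXn.
by rewrite eq_sym; case: eqP => _; rewrite ?mulr1 ?mulr0.
Qed.

Lemma hom_coef (s : seq R) m K : (m < K)%N ->
  hom s (Posz m) = (\prod_(a <- s) Gp K a)`_m.
Proof.
move=> mK; rewrite hom_coef0; symmetry.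
by apply: (eqK_prod (K := m.+1)) => // a; apply: eqK_G.
Qed.

Lemma Efac (c : R) : 1 - c%:P * 'X = (- c)%:P * 'X + 1.
Proof. by rewrite polyCN mulNr addrC. Qed.

Lemma esym_coef (z : seq R) i : (-1) ^+ i * esym z (Posz i) = (Ep z)`_i.
Proof.
rewrite /Ep /esym [in RHS](big_nth 0) [in RHS]big_mkord.
rewrite [in RHS](eq_bigr _ (fun i _ => Efac _)).
rewrite bigA_distr coef_sum mulr_sumr [LHS]big_mkcond /=.
apply: eq_bigr => J _.
rewrite -big_mkcond /= big_split /= -rmorph_prod prodr_const coefCM coefXn.
rewrite prodrN eq_sym.
by case: eqP => [->|_]; rewrite ?mulr1 ?mulr0.
Qed.

Lemma esym_neg (z : seq R) m : esym z (Negz m) = 0.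
Proof. by []. Qed.

Lemma esym_big (z : seq R) i : (size z < i)%N -> esym z (Posz i) = 0.
Proof.
move=> lt; rewrite /esym big1 // => J /eqP cJ.
have := max_card J; rewrite card_ord cJ => le; lia.
Qed.

Lemma hom_neg (s : seq R) m : hom s (Negz m) = 0.
Proof. by []. Qed.

End P2.

Lemma yrep_prod (T : Type) (x0 : T) (S : comNzRingType) (y : seq T) (mu : seq nat)
  (F : T -> S) : size y = size mu ->
  \prod_(a <- yrep y mu) F a = \prod_(i < size mu) F (nth x0 y i) ^+ nth 0%N mu i.
Proof.
elim: y mu => [|a y IH] [|m mu] //= hs.
  by rewrite /yrep /= big_nil big_ord0.
case: hs => hs; rewrite big_ord_recl /= -IH // /yrep /= big_cat /= big_nseq iter_mulr_1.
by [].
Qed.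

Lemma yrep_size (T : Type) (y : seq T) (mu : seq nat) : size y = size mu ->
  size (yrep y mu) = sumn mu.
Proof.
elim: y mu => [|a y IH] [|m mu] //= hs.
by case: hs => hs; rewrite /yrep /= size_cat size_nseq -IH.
Qed.

Lemma hockey (M s : nat) : (\sum_(j < M.+1) 'C(j + s, s))%N = 'C(M + s.+1, s.+1).
Proof.
elim: M => [|M IH]; first by rewrite big_ord1 add0n !binn.
rewrite big_ord_recr /= IH.
have -> : (M.+1 + s.+1 = (M + s.+1).+1)%N by lia.
rewrite binS; have -> : (M + s.+1 = M.+1 + s)%N by lia.
by rewrite addnC.
Qed.

Lemma Gpow (R : comNzRingType) K (c : R) s M : (M < K)%N ->
  ((Gp K c) ^+ s.+1)`_M = ('C(M + s, s))%:R * c ^+ M.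
Proof.
elim: s M => [|s IH] M MK.
  by rewrite expr1 coefG MK addn0 bin0 mul1r.
rewrite exprSr coefM.
rewrite (eq_bigr (fun j : 'I_M.+1 => ('C(j + s, s))%:R * c ^+ M)); last first.
  move=> j _; have jM : (j <= M)%N by rewrite -ltnS.
  rewrite IH ?(leq_ltn_trans jM MK) // coefG.
  have -> : (M - j < K)%N by apply: leq_ltn_trans MK; apply: leq_subr.
  by rewrite -mulrA -exprD subnKC.
by rewrite -mulr_suml -natr_sum hockey.
Qed.

Lemma key (R : comNzRingType) n (y : n.-tuple R) (kap : n.-tuple nat) q0 r M :
  (q0 < n)%N -> (0 < r)%N -> (r <= nth 0%N kap q0)%N ->
  \sum_(i < M.+1) hom (yrep y kap) (Posz (M - i)) *
     ((-1) ^+ i * esym (yrep y (kappa_minus kap q0 r)) (Posz i))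
  = ('C(M + r.-1, r.-1))%:R * (nth 0 y q0) ^+ M.
Proof.
move=> q0n r0 rk.
set K := M.+1.
have sy : size y = n by rewrite size_tuple.
have sk : size kap = n by rewrite size_tuple.
have sk' : size (kappa_minus kap q0 r) = n.
  by rewrite /kappa_minus size_set_nth sk; apply/maxn_idPr.
set P := \prod_(a <- yrep y kap) Gp K a.
set E := Ep (yrep y (kappa_minus kap q0 r)).
transitivity ((E * P)`_M).
  rewrite coefM; apply: eq_bigr => i _.
  have iM : (i <= M)%N by rewrite -ltnS.
  rewrite (hom_coef _ (K := K)); last by rewrite /K ltnS leq_subr.
  by rewrite esym_coef mulrC.
have hE : E = \prod_(i < n) (1 - (nth 0 y i)%:P * 'X) ^+ nth 0%N (kappa_minus kap q0 r) i.
  rewrite /E /Ep (yrep_prod 0); last by rewrite sy sk'.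
  by rewrite sk'.
have hP : P = \prod_(i < n) (Gp K (nth 0 y i)) ^+ nth 0%N kap i.
  by rewrite /P (yrep_prod 0) ?sy ?sk.
rewrite hE hP -big_split /=.
have -> : (\prod_(i < n) ((1 - (nth 0 y i)%:P * 'X) ^+ nth 0%N (kappa_minus kap q0 r) i *
        Gp K (nth 0 y i) ^+ nth 0%N kap i))`_M =
   (\prod_(i < n) Gp K (nth 0 y i) ^+ (if i == q0 :> nat then r else 0%N))`_M.
  apply: (eqK_prod (K := K)) => [i|]; last by [].
  have hk : nth 0%N kap i = (nth 0%N (kappa_minus kap q0 r) i + (if i == q0 :> nat then r else 0))%N.
    rewrite /kappa_minus nth_set_nth /=.
    by case: eqP => [->|_]; rewrite ?addn0 ?subnK.
  rewrite hk exprD mulrA -exprMn_comm; last by apply: mulrC.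
  rewrite (mulrC (1 - _)).
  apply: (eqK_trans (q := 1 ^+ _ * _)); last by rewrite expr1n mul1r.
  by apply: eqK_mul => //; apply: eqK_exp; apply: G_inv.
rewrite (bigD1 (Ordinal q0n)) //= eqxx big1 ?mulr1; last first.
  by move=> i /eqP hi; case: eqP => // h; case: hi; apply: val_inj.
clear hE sk' E; case: r r0 rk => // r _ _.
by rewrite Gpow.
Qed.

Lemma psum0 k : psum k 0 = 0%N.
Proof. by rewrite /psum big_ord0. Qed.

Lemma psumS k q : psum k q.+1 = (psum k q + nth 0%N k q)%N.
Proof. by rewrite /psum big_ord_recr. Qed.

Lemma psum_size k : psum k (size k) = sumn k.
Proof. by rewrite /psum sumnE (big_nth 0%N) big_mkord. Qed.

Lemma qidx_props k p0 : (p0 < sumn k)%N ->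
  [/\ (qidx k p0 < size k)%N, (psum k (qidx k p0) <= p0)%N
    & (p0 < psum k (qidx k p0).+1)%N].
Proof.
move=> hp.
have sk0 : (0 < size k)%N by case: k hp => //.
set P := fun q => (p0 < psum k q.+1)%N.
have hasP : has P (iota 0 (size k)).
  apply/hasP; exists (size k).-1; first by rewrite mem_iota /=; lia.
  by rewrite /P prednK // psum_size.
have qlt : (qidx k p0 < size k)%N.
  by rewrite /qidx -/P -[X in (_ < X)%N](size_iota 0 (size k)) -has_find.
have hq : P (qidx k p0).
  by have := nth_find 0%N hasP; rewrite -/(qidx k p0) nth_iota.
split => //.
move: qlt hq; rewrite /qidx -/P.
case E: (find P (iota 0 (size k))) => [|q] qlt hq; first by rewrite psum0.
have := @before_find _ 0%N P (iota 0 (size k)) q; rewrite E => /(_ (ltnSn q)).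
rewrite nth_iota /=; last by lia.
rewrite /P add0n => /negbT; rewrite -leqNgt.
by [].
Qed.

Lemma ridx_props k p0 : (p0 < sumn k)%N ->
  (0 < ridx k p0)%N /\ (ridx k p0 <= nth 0%N k (qidx k p0))%N.
Proof.
move=> /qidx_props [h1 h2 h3]; rewrite /ridx; move: h3; rewrite psumS; lia.
Qed.

Lemma sum_tail (R : comNzRingType) (f : nat -> R) n m : (n <= m)%N ->
  (forall i, (n <= i < m)%N -> f i = 0) ->
  \sum_(i < m) f i = \sum_(i < n) f i.
Proof.
move=> nm h; rewrite -!(big_mkord xpredT) (big_cat_nat _ (n := n)) //=.
rewrite [X in _ + X]big1_seq ?addr0 // => i /andP [_]; rewrite mem_index_iota.
exact: h.
Qed.

Lemma sum_rev (R : comNzRingType) (G : nat -> R) N r : (0 < r <= N)%N ->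
  (forall k, (N - r < k < N)%N -> G k = 0) ->
  \sum_(k < N) G k = \sum_(i < (N - r).+1) G (N - r - i)%N.
Proof.
move=> hr h; rewrite (sum_tail (n := (N - r).+1)); first last.
- by move=> i /andP [h1 h2]; apply: h; rewrite h2 andbT.
- lia.
rewrite -!(big_mkord xpredT) [LHS]big_nat_rev /= big_mkord.
by apply: eq_bigr => i _; rewrite add0n subSS.
Qed.

Lemma esym_lt0 (R : comNzRingType) (z : seq R) (m : int) : (m < 0)%R -> esym z m = 0.
Proof. by case: m => // m h; exfalso; lia. Qed.

Lemma hom_lt0 (R : comNzRingType) (z : seq R) (m : int) : (m < 0)%R -> hom z m = 0.
Proof. by case: m => // m h; exfalso; lia. Qed.

Lemma sumn_set_nth (s : seq nat) q v : (q < size s)%N ->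
  (sumn (set_nth 0%N s q v) + nth 0%N s q = sumn s + v)%N.
Proof.
elim: s q => [|a s IH] [|q] //= h.
  lia.
have := IH q h; lia.
Qed.

Theorem proposition5p2 (R : comNzRingType) (n : nat) (y : n.-tuple R)
  (kappa : n.-tuple nat) (lam : seq nat) :
  is_partition lam -> (size lam <= sumn kappa)%N ->
  Gmat lam y kappa = JT (sumn kappa) lam (yrep y kappa) *m Mmat y kappa.
Proof.
move=> _ _; apply/matrixP => j p; rewrite !mxE.
under eq_bigr do rewrite !mxE.
rewrite /=.
have pN := ltn_ord p.
have [r0 rk] := ridx_props pN.
have [q0n h1 h2] := qidx_props pN.
have jN := ltn_ord j.
set r := ridx kappa p in r0 rk *. set q0 := qidx kappa p in rk h1 h2 q0n *.
set x := yrep y kappa. set z := yrep y (kappa_minus kappa q0 r).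
set a := (sumn kappa + nth 0%N lam j - j.+1)%N.
rewrite size_tuple in q0n.
have rN : (r <= sumn kappa)%N by have rdef : r = (p.+1 - psum kappa q0)%N by []; lia.
have sz : size z = (sumn kappa - r)%N.
  rewrite /z yrep_size; last by rewrite /kappa_minus size_set_nth !size_tuple; apply/Logic.eq_sym/maxn_idPr.
  have q0s : (q0 < size kappa)%N by rewrite size_tuple.
  have := @sumn_set_nth kappa q0 (nth 0%N kappa q0 - r) q0s.
  rewrite /kappa_minus; lia.
pose G := fun i : nat => hom x ((nth 0%N lam j)%:Z - (j : nat)%:Z + i%:Z) *
   ((-1) ^+ absz ((sumn kappa)%:Z - (i.+1)%:Z - r%:Z + 1) *
    esym z ((sumn kappa)%:Z - (i.+1)%:Z - r%:Z + 1)).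
rewrite (eq_bigr (fun i : 'I__ => G i)) //.
rewrite (@sum_rev _ G (sumn kappa) r); first last.
- move=> k /andP [k1 k2]; rewrite /G esym_lt0 ?mulr0 //; lia.
- by rewrite r0 rN.
pose A : int := a%:Z + 1 - r%:Z.
have HG : forall i, (i <= sumn kappa - r)%N ->
    G (sumn kappa - r - i)%N = hom x (A - i%:Z) * ((-1) ^+ i * esym z (Posz i)).
  move=> i hi; rewrite /G /=.
  have e1 : (nth 0%N lam j)%:Z - (j : nat)%:Z + (sumn kappa - r - i)%N%:Z = A - i%:Z.
    rewrite /A /a; lia.
  have e2 : (sumn kappa)%:Z - ((sumn kappa - r - i)%N.+1)%:Z - r%:Z + 1 = Posz i.
    lia.
  by rewrite e1 e2.
pose F := fun i : nat => hom x (A - i%:Z) * ((-1) ^+ i * esym z (Posz i)).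
rewrite (eq_bigr (fun i : 'I__ => F i)); last by move=> i _; rewrite HG // -ltnS.
case: (leqP r.-1 a) => hra; last first.
  rewrite big1 // => i _; rewrite /F hom_lt0 ?mul0r //; rewrite /A; lia.
pose M := (a - r.-1)%N.
have Ma : (M + r.-1 = a)%N by rewrite /M; lia.
have AM : A = Posz M by rewrite /A /M; lia.
have K := @key R n y kappa q0 r M q0n r0 rk.
rewrite -/x -/z in K.
rewrite -Ma addnK -K.
rewrite [LHS](eq_bigr (fun i : 'I__ => F i)); last first.
  move=> i _; rewrite /F AM.
  have iM : (i <= M)%N by have := ltn_ord i.
  have -> : ((M - i)%N)%:Z = M%:Z - i%:Z by lia.
  by [].
rewrite -(@sum_tail _ F (M.+1) (M.+1 + (sumn kappa - r).+1)); first last.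
- move=> i /andP [i1 i2]; rewrite /F hom_lt0 ?mul0r // AM; lia.
- lia.
rewrite -(@sum_tail _ F ((sumn kappa - r).+1) (M.+1 + (sumn kappa - r).+1)) //; first last.
- move=> i /andP [i1 i2]; rewrite /F esym_big ?mulr0 // sz; lia.
- lia.
Qed.
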